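(* Let $\mathcal{D}$ be an $S(2,k,v)$ on element set $V$ and $G_1=1$-$\mathrm{BIG}(\mathcal{D})$. (a) If $\mathcal{D}$ has a parallel class, then $\alpha(G_1)=v/k$, and for every $\alpha$-set $I$ of $G_1$, every vertex of $V(G_1)\setminus I$ is adjacent to exactly $k$ vertices of $I$; in particular $|X_1|=\dots=|X_{k-1}|=0$ and $|X_k|=\frac{v(v-k)}{k(k-1)}$. (b) If $\mathcal{D}$ has a near parallel class, then $\alpha(G_1)=(v-1)/k$, and for every $\alpha$-set $I$, every vertex of $V(G_1)\setminus I$ is adjacent to either $k-1$ or $k$ vertices of $I$, with $|X_1|=\dots=|X_{k-2}|=0$, $|X_{k-1}|=\frac{v-1}{k-1}$ and $|X_k|=\frac{(v-1)(v-2k+1)}{k(k-1)}$.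
   Context: A Steiner $2$-design $S(2,k,v)$ ($2<k<v$) is a pair $(V,\mathcal{B})$ with $|V|=v$ and $\mathcal{B}$ a collection of $k$-subsets of $V$ (blocks) such that every $2$-subset of $V$ lies in exactly one block. A partial parallel class is a set of pairwise disjoint blocks; a parallel class is a set of blocks partitioning $V$; a near parallel class is a partial parallel class whose union is $V$ minus a single element. The $1$-block intersection graph $1$-$\mathrm{BIG}(\mathcal{D})$ has the blocks as vertices, two blocks adjacent iff they intersect in exactly one element. $\alpha(G)$ is the independence number and an $\alpha$-set is a maximum independent set. For an $\alpha$-set $I$ of a graph $G$ and $i\ge1$, $X_i$ is the set of vertices $u\in V(G)\setminus I$ adjacent to exactly $i$ vertices of $I$. *)

(* Defs.v *)
From mathcomp Require Import all_boot.
Set Implicit Arguments. Unset Strict Implicit. Unset Printing Implicit Defensive.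

Section Design.
Variable V : finType.

Definition steiner2 (k : nat) (B : {set {set V}}) : Prop :=
  [/\ 2 < k, k < #|V|,
      (forall b, b \in B -> #|b| = k) &
      (forall x y : V, x != y -> #|[set b in B | (x \in b) && (y \in b)]| = 1)].

Definition partial_parallel_class (B P : {set {set V}}) : Prop :=
  P \subset B /\
  (forall b1 b2, b1 \in P -> b2 \in P -> b1 != b2 -> [disjoint b1 & b2]).

Definition parallel_class (B P : {set {set V}}) : Prop :=
  partial_parallel_class B P /\ cover P = [set: V].

Definition near_parallel_class (B P : {set {set V}}) : Prop :=
  partial_parallel_class B P /\ exists x : V, cover P = [set: V] :\ x.

(* adjacency in the 1-block intersection graph 1-BIG(D) on vertex set B *)
Definition big1_adj (b1 b2 : {set V}) : bool := #|b1 :&: b2| == 1.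

Definition big1_independent (B I : {set {set V}}) : bool :=
  (I \subset B) &&
  [forall b1 in I, forall b2 in I, (b1 != b2) ==> ~~ big1_adj b1 b2].

Definition big1_alpha (B : {set {set V}}) : nat :=
  \max_(I : {set {set V}} | big1_independent B I) #|I|.

Definition big1_alpha_set (B I : {set {set V}}) : Prop :=
  big1_independent B I /\ #|I| = big1_alpha B.

Definition nbI (I : {set {set V}}) (u : {set V}) : nat :=
  #|[set b in I | big1_adj u b]|.

Definition Xset (B I : {set {set V}}) (i : nat) : {set {set V}} :=
  [set u in B :\: I | nbI I u == i].

End Design.

(* Main.v *)
Require Import Defs.
From mathcomp Require Import all_boot.
From Stdlib Require Import Lia.
Set Implicit Arguments. Unset Strict Implicit.

Lemma arith_a (b i v k X : nat): X = b - i -> b*(k*(k-1)) = v*(v-1) -> i*k = v -> 0 < k ->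
  X*(k*(k-1)) = v*(v-k).
Proof.
move=> -> E1 E2 kp; rewrite mulnBl E1 mulnA E2 -mulnBr.
congr (_ * _); move/leP: kp => kp. rewrite -minusE. lia.
Qed.
Lemma arith_b (b i v k X r : nat) : X + r = b - i -> b*(k*(k-1)) = v*(v-1) -> i*k = v-1 ->
  r*(k-1) = v-1 -> 0 < k -> X*(k*(k-1)) = (v-1)*(v+1-2*k).
Proof.
move=> E0 E1 E2 E3 kp.
have E4 : (X + r) * (k*(k-1)) = v*(v-1) - (v-1)*(k-1).
  by rewrite E0 mulnBl E1 mulnA E2.
have E5 : r * (k*(k-1)) = (v-1)*k by rewrite mulnCA E3 mulnC.
rewrite mulnDl E5 in E4.
have -> : v + 1 - 2*k = v - (k-1) - k.
  move/leP: kp => kp; rewrite -!minusE -!plusE -multE; lia.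
rewrite (mulnBr (v-1) (v - (k-1)) k) (mulnBr (v-1) v (k-1)); rewrite (mulnC v (v-1)) in E4.
move: E4; move: (X * (k*(k-1))) ((v-1)*k) ((v-1)*v) ((v-1)*(k-1)) => p q a c.
rewrite -!minusE -!plusE; lia.
Qed.

Section S.
Variable V : finType.

Lemma card_sum (T : finType) (p q : pred T) :
  #|[set a | p a && q a]| = \sum_(a | p a) (q a : nat).
Proof.
rewrite -big_mkcondr /= -sum1_card; apply: eq_bigl => a; by rewrite inE.
Qed.

Lemma sum_in_card (A C : {set V}) :
  \sum_(x in A) (x \in C : nat) = #|A :&: C|.
Proof. by rewrite -card_sum; apply: eq_card => x; rewrite !inE. Qed.

Variables (k : nat) (B : {set {set V}}).
Hypothesis HS : steiner2 k B.

Lemma inter_le1 b1 b2 : b1 \in B -> b2 \in B -> b1 != b2 -> #|b1 :&: b2| <= 1.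
Proof.
case: HS => _ _ _ Hp b1B b2B ne.
rewrite leqNgt; apply/negP => /card_gt1P [x [y [xin yin xy]]].
move: xin yin; rewrite !inE => /andP[x1 x2] /andP[y1 y2].
have := Hp x y xy.
have : [set b1; b2] \subset [set b in B | (x \in b) && (y \in b)].
  apply/subsetP => b; rewrite !inE => /orP[]/eqP->; rewrite ?b1B ?b2B ?x1 ?x2 ?y1 ?y2 //.
move/subset_leq_card; rewrite cards2 ne => H1 H2; by rewrite H2 in H1.
Qed.

Lemma indep_disj I : big1_independent B I ->
  {in I &, forall b1 b2 : {set V}, b1 != b2 -> [disjoint b1 & b2]}.
Proof.
case/andP => sIB /forall_inP H b1 b2 b1I b2I ne.
have /forall_inP/(_ _ b2I) := H _ b1I; rewrite ne /= /big1_adj => H1.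
have := inter_le1 (subsetP sIB _ b1I) (subsetP sIB _ b2I) ne.
rewrite leq_eqVlt (negbTE H1) /= ltnS leqn0 cards_eq0.
by rewrite -setI_eq0.
Qed.


Lemma indep_card I : big1_independent B I -> #|cover I| = #|I| * k.
Proof.
move=> HI; have /trivIsetP/eqP <- := indep_disj HI.
rewrite -sum_nat_const; apply: eq_bigr => b bI.
case: HS => _ _ Hk _; apply: Hk; case/andP: HI => /subsetP s _; exact: s.
Qed.

Lemma alpha_le : k * big1_alpha B <= #|V|.
Proof.
have: big1_alpha B <= #|V| %/ k.
  apply/bigmax_leqP => I HI.
  have kp : 0 < k by case: HS => /ltnW/ltnW.
  rewrite leq_divRL // -indep_card //; exact: max_card.
have kp : 0 < k by case: HS => /ltnW/ltnW.
by rewrite mulnC -leq_divRL.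
Qed.

Lemma alpha_ge P : big1_independent B P -> #|P| <= big1_alpha B.
Proof. move=> HP; exact: (@leq_bigmax_cond _ (fun I => big1_independent B I) (fun I => #|I|) _ HP). Qed.

Lemma sum_cover I : big1_independent B I ->
  forall x, \sum_(b in I) (x \in b : nat) = (x \in cover I).
Proof.
move=> HI x; case: (boolP (x \in cover I)) => [/bigcupP [b0 b0I xb0]|nx].
  rewrite (bigD1 b0) //= xb0 big1 // => b /andP[bI ne].
  have := indep_disj HI bI b0I ne; rewrite disjoints_subset => /subsetP s.
  by case: (boolP (x \in b)) => // /s; rewrite inE xb0.
rewrite big1 // => b bI; case: (boolP (x \in b)) => // xb.
by case/negP: nx; apply/bigcupP; exists b.
Qed.

Lemma nbI_eq I u : big1_independent B I -> u \in B -> u \notin I ->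
  nbI I u = #|u :&: cover I|.
Proof.
move=> HI uB uI.
rewrite -sum_in_card.
under eq_bigr => x _ do rewrite -(sum_cover HI).
rewrite exchange_big /=.
rewrite /nbI card_sum; apply: eq_bigr => b bI.
rewrite sum_in_card /big1_adj.
have := inter_le1 uB (subsetP (proj1 (andP HI)) _ bI).
have -> : u != b by apply: contraNneq uI => ->.
move=> /(_ isT); case: #|_| => [|[|]] //.
Qed.


Lemma repl x : #|[set b in B | x \in b]| * (k - 1) = #|V| - 1.
Proof.
case: HS => _ _ Hk Hp.
rewrite [RHS]subn1 -(cardsC1 x) -[RHS]sum1_card.
transitivity (\sum_(y in [set~ x]) #|[set b in B | (x \in b) && (y \in b)]|); last first.
  by apply: eq_bigr => y; rewrite !inE eq_sym => /Hp.
rewrite (eq_bigr (fun y => \sum_(b | (b \in B) && (x \in b)) (y \in b : nat))); last first.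
  move=> y _; rewrite -(card_sum (fun b => (b \in B) && (x \in b))).
  by apply: eq_card => b; rewrite !inE andbA.
rewrite exchange_big /= -sum_nat_const; apply: eq_big => [b|b]; first by rewrite inE.
rewrite inE => /andP[bB xb].
rewrite sum_in_card (_ : [set~ x] :&: b = b :\ x); last first.
  by apply/setP => y; rewrite !inE andbC.
have := cardsD1 x b; rewrite xb Hk // => ->; by rewrite add1n subn1.
Qed.

Lemma nblocks : #|B| * (k * (k - 1)) = #|V| * (#|V| - 1).
Proof.
case: HS => _ _ Hk Hp.
rewrite -sum_nat_const.
rewrite (eq_bigr (fun b => #|[set: V] :&: b| * (k - 1))); last first.
  by move=> b bB; rewrite setTI Hk.
rewrite -big_distrl /=.
under eq_bigr => b _ do rewrite -sum_in_card.
rewrite exchange_big /= big_distrl /= -sum_nat_const.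
apply: eq_big => [x|x _]; first by rewrite inE.
rewrite -(repl x) (card_sum (fun b => b \in B)) //.
Qed.


Lemma ppc_indep P : partial_parallel_class B P -> big1_independent B P.
Proof.
case=> sPB dP; rewrite /big1_independent sPB /=.
apply/forall_inP => b1 b1P; apply/forall_inP => b2 b2P; apply/implyP => ne.
have := dP _ _ b1P b2P ne; rewrite -setI_eq0 /big1_adj => /eqP ->.
by rewrite cards0.
Qed.

End S.

Theorem mainTheorem5 (V : finType) (k : nat) (B : {set {set V}}) :
  steiner2 k B ->
  ((exists P, parallel_class B P) ->
     k * big1_alpha B = #|V| /\
     (forall I, big1_alpha_set B I ->
        [/\ (forall u, u \in B :\: I -> nbI I u = k),
            (forall i, (1 <= i <= k - 1) -> #|Xset B I i| = 0) &
            #|Xset B I k| * (k * (k - 1)) = #|V| * (#|V| - k)])) /\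
  ((exists P, near_parallel_class B P) ->
     k * big1_alpha B = #|V| - 1 /\
     (forall I, big1_alpha_set B I ->
        [/\ (forall u, u \in B :\: I -> nbI I u = k - 1 \/ nbI I u = k),
            (forall i, (1 <= i <= k - 2) -> #|Xset B I i| = 0),
            #|Xset B I (k - 1)| * (k - 1) = #|V| - 1 &
            #|Xset B I k| * (k * (k - 1)) = (#|V| - 1) * (#|V| + 1 - 2 * k)])).
Proof.
move=> HS.
have kp : 0 < k by case: HS => /ltnW/ltnW.
have k2 : 2 < k by case: HS.
have Hk : forall b, b \in B -> #|b| = k by case: HS.
have aleq := alpha_le HS.
split.
- case=> P [HP covP].
  have HPi := ppc_indep HP.
  have cP : #|P| * k = #|V| by rewrite -(indep_card HS HPi) covP cardsT.
  have aeq : k * big1_alpha B = #|V|.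
    apply/eqP; rewrite eqn_leq aleq -cP mulnC leq_mul2l.
    by rewrite (alpha_ge HPi) orbT.
  split=> // I [HI cI].
  have sIB : I \subset B by case/andP: HI.
  have covI : cover I = [set: V].
    by apply/eqP; rewrite eqEcard subsetT cardsT (indep_card HS HI) cI mulnC aeq leqnn.
  have nb : forall u, u \in B :\: I -> nbI I u = k.
    move=> u; rewrite inE => /andP[uI uB].
    by rewrite (nbI_eq HS HI uB uI) covI setIT Hk.
  split=> //.
  + move=> i /andP[i1 ik]; apply/eqP; rewrite cards_eq0; apply/eqP/setP => u.
    rewrite !inE; apply/negbTE/negP => /andP[uBI /eqP ni].
    have := nb u; rewrite inE uBI => /(_ isT); rewrite ni => ik'.
    move: ik; rewrite ik' => /leP; move/leP: kp; rewrite -minusE; lia.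
  + apply: (arith_a _ (nblocks HS) (esym (etrans (esym aeq) (mulnC _ _))) kp).
    have -> : #|Xset B I k| = #|B :\: I|.
      apply: eq_card => u; rewrite !inE; apply/andP/idP => [[]//|H]; split=> //.
      by rewrite nb // inE.
    by rewrite cardsD (setIidPr sIB) cI.
- case=> P [HP [x covP]].
  have HPi := ppc_indep HP.
  have vx : #|[set: V] :\ x| = #|V| - 1.
    by rewrite -cardsT (cardsD1 x [set: V]) in_setT add1n subn1.
  have cP : #|P| * k = #|V| - 1 by rewrite -(indep_card HS HPi) covP vx.
  have aeq : k * big1_alpha B = #|V| - 1.
    have := alpha_ge HPi; rewrite leq_eqVlt => /orP[/eqP <-|lt].
      by rewrite mulnC.
    have : k * (#|P|).+1 <= k * big1_alpha B by rewrite leq_mul2l lt orbT.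
    move: aleq; rewrite mulnS (mulnC k #|P|) cP.
    move: (k * big1_alpha B) => a; move/ltP: k2 => k2'.
    move/leP => h1 /leP h2; exfalso; rewrite -!minusE -!plusE in h2; lia.
  split=> // I [HI cI].
  have sIB : I \subset B by case/andP: HI.
  have ccI : #|cover I| = #|V| - 1 by rewrite (indep_card HS HI) cI mulnC aeq.
  have vp : 0 < #|V| by case: HS => _ /(ltn_trans kp).
  have [z zn] : exists z, z \notin cover I.
    case: (pickP [pred z | z \notin cover I]) => [z zn|H]; first by exists z.
    have cT : cover I = [set: V].
      by apply/setP => y; rewrite in_setT; move: (H y) => /= /negbFE.
    move: ccI; rewrite cT cardsT; move/leP: vp; rewrite -minusE; lia.
  have covI : cover I = [set: V] :\ z.
    apply/eqP; rewrite eqEcard; apply/andP; split.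
      apply/subsetP => y yc; rewrite !inE andbT; apply/eqP => yz.
      by move: zn; rewrite -yz yc.
    by rewrite ccI -cardsT (cardsD1 z [set: V]) in_setT add1n subn1.
  have zI : forall u, u \in B -> z \in u -> u \notin I.
    move=> u uB zu; apply/negP => uI; case/negP: zn; apply/bigcupP; by exists u.
  have nbz : forall u, u \in B -> u \notin I -> nbI I u = k - (z \in u).
    move=> u uB uI; rewrite (nbI_eq HS HI uB uI) covI.
    have -> : u :&: ([set: V] :\ z) = u :\ z.
      by apply/setP => y; rewrite !inE andbT andbC.
    by rewrite -(Hk u uB) (cardsD1 z u) addKn.
  have XA : #|Xset B I (k - 1)| = #|(B :\: I) :&: [set u : {set V} | z \in u]|.
    apply: eq_card => u; rewrite !inE; apply/andP/idP.
      case=> /andP[uI uB]; rewrite nbz // uI uB /=; case: (z \in u) => //.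
      rewrite subn0 => /eqP H; move: H; move/leP: kp; rewrite -minusE; lia.
    case/andP => /andP[uI uB] zu; rewrite uI uB nbz // zu //.
  have XB : #|Xset B I k| = #|(B :\: I) :\: [set u : {set V} | z \in u]|.
    apply: eq_card => u; rewrite !inE; apply/andP/idP.
      case=> /andP[uI uB]; rewrite nbz // uI uB /=; case: (z \in u) => //.
      move=> /eqP H; exfalso; move: H; rewrite /=; move/leP: kp; rewrite -minusE; lia.
    case/andP => zu /andP[uI uB]; rewrite uI uB nbz // (negbTE zu) subn0 //.
  have XR : #|Xset B I (k - 1)| = #|[set b in B | z \in b]|.
    rewrite XA; apply: eq_card => u; rewrite !inE; apply/idP/idP.
      by case/andP => /andP[_ ->] ->.
    by case/andP => uB zu; rewrite zu uB zI.
  split.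
  + move=> u; rewrite inE => /andP[uI uB]; rewrite nbz //.
    by case: (z \in u); [left|right; rewrite subn0].
  + move=> i /andP[i1 ik]; apply/eqP; rewrite cards_eq0; apply/eqP/setP => u.
    rewrite !inE; apply/negbTE/negP => /andP[/andP[uI uB] /eqP ni].
    move: ni ik; rewrite nbz //; case: (z \in u) => <- /leP;
      move/leP: k2; rewrite /= -!minusE; lia.
  + by rewrite XR repl.
  + apply: (arith_b (r := #|[set b in B | z \in b]|) _ (nblocks HS) _ _ kp).
    - by rewrite XB -XR XA addnC cardsID cardsD (setIidPr sIB).
    - by rewrite cI mulnC aeq.
    - exact: repl.
Qed.
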